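(* Let $F$ be a Finsler function on a two-dimensional manifold $M$, written on the region $y^1\neq0$ as $F=|y^1|f(x,u)$ with $u=y^2/y^1$, and let $\sigma$ be a smooth function on $M$. Put $Q=\frac{f'}{f-uf'}$ and let $\overline F=e^{\sigma(x)}F=|y^1|\overline f(x,u)$ with $\overline f=e^{\sigma}f$, $\overline Q=\frac{\overline f'}{\overline f-u\overline f'}$. Then $$\overline f_1'''+\overline Q\,\overline f_2'''=f_1'''+Qf_2'''+\frac{2\sigma_1QQ'Q'''-3\sigma_1Q''^2Q-2\sigma_2Q'Q'''+3\sigma_2Q''^2}{2Q'^2},$$ where $\overline f_1,\overline f_2$ are the functions $f_1,f_2$ computed from $\overline f$ in place of $f$.
   Context: Coordinates $(x^1,x^2)$ on $M$, $(x^i,y^i)$ on $TM$; $\partial_i=\partial/\partial x^i$; primes denote derivatives with respect to $u$; $\sigma_i=\partial\sigma/\partial x^i$. The functions $f_1,f_2$ are defined by $f_1=\frac{(\partial_1f+u\partial_2f)f''-(\partial_1f'+u\partial_2f'-\partial_2f)f'}{2ff''}$ and $f_2=\frac{u(\partial_1f+u\partial_2f)f''+(\partial_1f'+u\partial_2f'-\partial_2f)(f-uf')}{2ff''}$; they satisfy $G^1=f_1(y^1)^2$, $G^2=f_2(y^1)^2$ for the geodesic spray coefficients $G^i$ of $F$. For a Finsler surface one has $f''\neq0$ and $Q'=\frac{ff''}{(f-uf')^2}\neq0$. *)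

(* Defs.v *)
From Stdlib Require Import Reals List.
From Coquelicot Require Import Coquelicot.
Open Scope R_scope.

(* Functions of the local coordinates (x^1, x^2, u) with u = y^2/y^1. *)
Definition fun3 := R -> R -> R -> R.

Definition d1 (g : fun3) : fun3 := fun x1 x2 u => Derive (fun t => g t x2 u) x1.
Definition d2 (g : fun3) : fun3 := fun x1 x2 u => Derive (fun t => g x1 t u) x2.
Definition du (g : fun3) : fun3 := fun x1 x2 u => Derive (fun t => g x1 x2 t) u.

Inductive dir := D1 | D2 | DU.

Definition dpart (k : dir) (g : fun3) : fun3 :=
  match k with D1 => d1 g | D2 => d2 g | DU => du g end.

Definition ex_dpart (k : dir) (g : fun3) (x1 x2 u : R) : Prop :=
  match k with
  | D1 => ex_derive (fun t => g t x2 u) x1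
  | D2 => ex_derive (fun t => g x1 t u) x2
  | DU => ex_derive (fun t => g x1 x2 t) u
  end.

Fixpoint iter_d (l : list dir) (g : fun3) : fun3 :=
  match l with nil => g | k :: l' => dpart k (iter_d l' g) end.

Definition smooth_on (D : R -> R -> R -> Prop) (g : fun3) : Prop :=
  forall (l : list dir) (x1 x2 u : R), D x1 x2 u ->
    (forall k, ex_dpart k (iter_d l g) x1 x2 u) /\
    continuous (fun q : R * R * R => iter_d l g (fst (fst q)) (snd (fst q)) (snd q))
               (x1, x2, u).

Definition Qf (g : fun3) : fun3 :=
  fun x1 x2 u => du g x1 x2 u / (g x1 x2 u - u * du g x1 x2 u).

(* f_1, f_2 of the paper (G^1 = f_1 (y^1)^2, G^2 = f_2 (y^1)^2) *)
Definition f1 (g : fun3) : fun3 := fun x1 x2 u =>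
  ((d1 g x1 x2 u + u * d2 g x1 x2 u) * du (du g) x1 x2 u
   - (d1 (du g) x1 x2 u + u * d2 (du g) x1 x2 u - d2 g x1 x2 u) * du g x1 x2 u)
  / (2 * g x1 x2 u * du (du g) x1 x2 u).

Definition f2 (g : fun3) : fun3 := fun x1 x2 u =>
  (u * (d1 g x1 x2 u + u * d2 g x1 x2 u) * du (du g) x1 x2 u
   + (d1 (du g) x1 x2 u + u * d2 (du g) x1 x2 u - d2 g x1 x2 u)
     * (g x1 x2 u - u * du g x1 x2 u))
  / (2 * g x1 x2 u * du (du g) x1 x2 u).

Definition du3 (g : fun3) : fun3 := du (du (du g)).

Definition fbar (sigma : R -> R -> R) (g : fun3) : fun3 :=
  fun x1 x2 u => exp (sigma x1 x2) * g x1 x2 u.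

(* Main.v *)
Require Import Defs.
From Stdlib Require Import Reals List.
From Coquelicot Require Import Coquelicot.
From Stdlib Require Import Lra Lia FunctionalExtensionality.
Open Scope R_scope.

Definition smn (n:nat) (f:R->R) := forall k x, (k <= n)%nat -> ex_derive (Derive_n f k) x.
Definition sm (f:R->R) := forall n x, ex_derive (Derive_n f n) x.

Lemma Dn_S f k : Derive_n (Derive f) k = Derive_n f (S k).
Proof.
  induction k.
  - apply functional_extensionality; intro x; reflexivity.
  - apply functional_extensionality; intro x. simpl. rewrite IHk. reflexivity.
Qed.

Lemma smn_S n f : smn (S n) f <-> (forall x, ex_derive f x) /\ smn n (Derive f).
Proof.
  split.
  - intros H; split.
    + intro x. exact (H 0%nat x (Nat.le_0_l _)).
    + intros k x Hk. rewrite Dn_S. apply H. lia.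
  - intros [H1 H2] k x Hk. destruct k.
    + exact (H1 x).
    + rewrite <- Dn_S. apply H2. lia.
Qed.

Lemma smn_mono n f : smn (S n) f -> smn n f.
Proof. intros H k x Hk. apply H. lia. Qed.

Lemma smn_plus n : forall f g, smn n f -> smn n g -> smn n (fun x => f x + g x).
Proof.
  induction n; intros f g Hf Hg.
  - intros k x Hk. assert (k = 0%nat) by lia. subst. simpl.
    pose proof (Hf 0%nat x (le_n _)). pose proof (Hg 0%nat x (le_n _)).
    simpl in *. auto_derive. tauto.
  - apply smn_S in Hf as [Hf1 Hf2]. apply smn_S in Hg as [Hg1 Hg2].
    apply smn_S; split.
    + intro x. auto_derive. auto.
    + replace (Derive (fun x => f x + g x)) with (fun x => Derive f x + Derive g x).
      * apply IHn; auto.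
      * apply functional_extensionality; intro x. rewrite Derive_plus; auto.
Qed.

Lemma smn_mult n : forall f g, smn n f -> smn n g -> smn n (fun x => f x * g x).
Proof.
  induction n; intros f g Hf Hg.
  - intros k x Hk. assert (k = 0%nat) by lia. subst. simpl.
    pose proof (Hf 0%nat x (le_n _)). pose proof (Hg 0%nat x (le_n _)).
    simpl in *. auto_derive. tauto.
  - pose proof Hf as Hf'. pose proof Hg as Hg'.
    apply smn_S in Hf as [Hf1 Hf2]. apply smn_S in Hg as [Hg1 Hg2].
    apply smn_S; split.
    + intro x. auto_derive. auto.
    + replace (Derive (fun x => f x * g x)) with (fun x => Derive f x * g x + f x * Derive g x).
      * apply smn_plus; apply IHn; auto; apply smn_mono; auto.
      * apply functional_extensionality; intro x. rewrite Derive_mult; auto.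
Qed.

Lemma smn_const n c : smn n (fun _ => c).
Proof.
  induction n.
  - intros k x Hk. assert (k = 0%nat) by lia. subst. simpl. auto_derive. auto.
  - apply smn_S; split.
    + intro x. auto_derive. auto.
    + replace (Derive (fun _ => c)) with (fun _ : R => 0).
      * clear IHn. induction n.
        -- intros k x Hk. assert (k = 0%nat) by lia. subst. simpl. auto_derive. auto.
        -- apply smn_S; split. intro x; auto_derive; auto.
           replace (Derive (fun _ => 0)) with (fun _ : R => 0). auto.
           apply functional_extensionality; intro x. rewrite Derive_const; auto.
      * apply functional_extensionality; intro x. rewrite Derive_const; auto.
Qed.

Lemma smn_id n : smn n (fun x => x).
Proof.
  destruct n.
  - intros k x Hk. assert (k = 0%nat) by lia. subst. simpl. auto_derive. auto.
  - apply smn_S; split.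
    + intro x. auto_derive. auto.
    + replace (Derive (fun x => x)) with (fun _ : R => 1). apply smn_const.
      apply functional_extensionality; intro x. symmetry. apply is_derive_unique. auto_derive; auto.
Qed.

Lemma smn_inv n : forall g, (forall x, g x <> 0) -> smn n g -> smn n (fun x => / g x).
Proof.
  induction n; intros g Hg0 Hg.
  - intros k x Hk. assert (k = 0%nat) by lia. subst. simpl.
    pose proof (Hg 0%nat x (le_n _)). simpl in *. auto_derive. auto.
  - pose proof Hg as Hg'. apply smn_S in Hg as [Hg1 Hg2].
    apply smn_S; split.
    + intro x. auto_derive. auto.
    + replace (Derive (fun x => / g x)) with (fun x => (-1 * Derive g x) * (/ g x * / g x)).
      * apply smn_mult. apply smn_mult. apply smn_const. auto.
        apply smn_mult; apply IHn; auto; apply smn_mono; auto.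
      * apply functional_extensionality; intro x. rewrite Derive_inv; auto.
        field. auto.
Qed.

Lemma sm_smn f : sm f <-> forall n, smn n f.
Proof. split; intros H. intros n k x _. apply H. intros n x. apply (H n n x (le_n _)). Qed.

Lemma sm_plus f g : sm f -> sm g -> sm (fun x => f x + g x).
Proof. rewrite !sm_smn. intros. apply smn_plus; auto. Qed.
Lemma sm_mult f g : sm f -> sm g -> sm (fun x => f x * g x).
Proof. rewrite !sm_smn. intros. apply smn_mult; auto. Qed.
Lemma sm_const c : sm (fun _ => c).
Proof. rewrite !sm_smn. intros. apply smn_const; auto. Qed.
Lemma sm_id : sm (fun x => x).
Proof. rewrite !sm_smn. intros. apply smn_id; auto. Qed.
Lemma sm_inv g : (forall x, g x <> 0) -> sm g -> sm (fun x => / g x).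
Proof. rewrite !sm_smn. intros. apply smn_inv; auto. Qed.
Lemma sm_div f g : (forall x, g x <> 0) -> sm f -> sm g -> sm (fun x => f x / g x).
Proof. intros. unfold Rdiv. apply sm_mult; auto. apply sm_inv; auto. Qed.
Lemma sm_minus f g : sm f -> sm g -> sm (fun x => f x - g x).
Proof.
  intros. replace (fun x => f x - g x) with (fun x => f x + (-1) * g x).
  apply sm_plus; auto. apply sm_mult; auto. apply sm_const.
  apply functional_extensionality; intro; ring.
Qed.
Lemma sm_D f : sm f -> sm (Derive f).
Proof. intros H n x. rewrite Dn_S. apply H. Qed.
Lemma sm_ex f : sm f -> forall x, ex_derive f x.
Proof. intros H x. exact (H 0%nat x). Qed.

Lemma sm_exn f : sm f -> forall x k, ex_derive_n f k x.
Proof. intros H x k. destruct k. simpl; auto. apply H. Qed.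

Lemma Dn_plus f g n x : sm f -> sm g ->
  Derive_n (fun y => f y + g y) n x = Derive_n f n x + Derive_n g n x.
Proof.
  intros Hf Hg. apply Derive_n_plus; apply filter_forall; intros y k _; apply sm_exn; auto.
Qed.

Lemma D_mult f g : sm f -> sm g ->
  Derive (fun x => f x * g x) = (fun x => Derive f x * g x + f x * Derive g x).
Proof.
  intros Hf Hg. apply functional_extensionality; intro x. rewrite Derive_mult; auto; apply sm_ex; auto.
Qed.

Lemma L1 f g x : sm f -> sm g -> Derive_n (fun y => f y * g y) 1 x =
  Derive_n f 1 x * Derive_n g 0 x + Derive_n f 0 x * Derive_n g 1 x.
Proof. intros Hf Hg. simpl. rewrite Derive_mult; auto; apply sm_ex; auto. Qed.

Lemma L2 f g x : sm f -> sm g -> Derive_n (fun y => f y * g y) 2 x =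
  Derive_n f 2 x * Derive_n g 0 x + 2 * Derive_n f 1 x * Derive_n g 1 x + Derive_n f 0 x * Derive_n g 2 x.
Proof.
  intros Hf Hg. rewrite <- Dn_S. rewrite D_mult; auto.
  rewrite Dn_plus; try (apply sm_mult; auto using sm_D).
  rewrite !L1; auto using sm_D. rewrite !Dn_S. simpl. ring.
Qed.

Lemma L3 f g x : sm f -> sm g -> Derive_n (fun y => f y * g y) 3 x =
  Derive_n f 3 x * Derive_n g 0 x + 3 * Derive_n f 2 x * Derive_n g 1 x
  + 3 * Derive_n f 1 x * Derive_n g 2 x + Derive_n f 0 x * Derive_n g 3 x.
Proof.
  intros Hf Hg. rewrite <- Dn_S. rewrite D_mult; auto.
  rewrite Dn_plus; try (apply sm_mult; auto using sm_D).
  rewrite !L2; auto using sm_D. rewrite !Dn_S.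
  change (Derive_n g 0 x) with (g x). change (Derive_n f 0 x) with (f x).
  change (Derive_n (Derive f) 0 x) with (Derive f x).
  change (Derive_n (Derive g) 0 x) with (Derive g x).
  change (Derive_n f 1 x) with (Derive (fun y => f y) x).
  change (Derive_n g 1 x) with (Derive (fun y => g y) x).
  ring.
Qed.

Lemma poly_D3 a b c x : Derive_n (fun t => a + b*t + c*(t*t)) 3 x = 0.
Proof.
  rewrite <- Dn_S.
  replace (Derive (fun t => a + b*t + c*(t*t))) with (fun t => b + 2*c*t).
  - rewrite <- Dn_S.
    replace (Derive (fun t => b + 2*c*t)) with (fun _ : R => 2*c).
    + apply (Derive_n_const 0).
    + apply functional_extensionality; intro t. symmetry. apply is_derive_unique. auto_derive; auto. ring.
  - apply functional_extensionality; intro t. symmetry. apply is_derive_unique. auto_derive; auto. ring.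
Qed.

Lemma solve_lin x y z : z <> 0 -> x * z = y -> x = y / z.
Proof. intros Hz H. subst. field. auto. Qed.

Ltac smt_step :=
  match goal with
  | H : sm ?g |- sm ?g => exact H
  | |- sm (fun _ => ?c) => exact (sm_const c)
  | |- sm (fun t => t) => exact sm_id
  | |- sm (fun t => @?a t + @?b t) => apply (sm_plus a b)
  | |- sm (fun t => @?a t - @?b t) => apply (sm_minus a b)
  | |- sm (fun t => @?a t * @?b t) => apply (sm_mult a b)
  | |- sm (fun t => @?a t / @?b t) => apply (sm_div a b)
  end.
Ltac smt := repeat smt_step.

Lemma D3_split (g h k : R -> R) (a b c c1 c2 x : R) : sm g -> sm h -> sm k ->
  Derive_n (fun t => g t + (a + b*t + c*(t*t)) + (c1 * h t + c2 * k t)) 3 x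
  = Derive_n g 3 x + c1 * Derive_n h 3 x + c2 * Derive_n k 3 x.
Proof.
  intros Hg Hh Hk.
  assert (sp : sm (fun t => a + b*t + c*(t*t))) by smt.
  assert (sh : sm (fun t => c1 * h t)) by smt.
  assert (sk : sm (fun t => c2 * k t)) by smt.
  rewrite (Dn_plus (fun t => g t + (a + b*t + c*(t*t))) (fun t => c1 * h t + c2 * k t)); [|smt|smt].
  rewrite (Dn_plus g (fun t => a + b*t + c*(t*t))); auto.
  rewrite (Dn_plus (fun t => c1 * h t) (fun t => c2 * k t)); auto.
  rewrite poly_D3, !Derive_n_scal_l. ring.
Qed.

Lemma leaf_Dn (g : fun3) l x1 x2 n :
  Derive_n (fun t => iter_d l g x1 x2 t) n = fun t => iter_d (repeat DU n ++ l) g x1 x2 t.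
Proof.
  induction n.
  - reflexivity.
  - apply functional_extensionality; intro t. simpl. rewrite IHn. reflexivity.
Qed.

Lemma leaf_sm (D : R -> R -> R -> Prop) g x1 x2 :
  smooth_on D g -> (forall u, D x1 x2 u) -> forall l, sm (fun t => iter_d l g x1 x2 t).
Proof.
  intros Hg HD l n x. rewrite leaf_Dn.
  destruct (Hg (repeat DU n ++ l) x1 x2 x (HD x)) as [H _].
  exact (H DU).
Qed.

Lemma du_fbar sigma g : du (fbar sigma g) = fbar sigma (du g).
Proof.
  apply functional_extensionality; intro a.
  apply functional_extensionality; intro b.
  apply functional_extensionality; intro c.
  unfold du, fbar. apply Derive_scal.
Qed.

Lemma ex_exp_comp (h : R -> R) x : ex_derive h x -> ex_derive (fun t => exp (h t)) x.
Proof. intros H. auto_derive. auto. Qed.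

Lemma d1_fbar sigma g x1 x2 u :
  ex_derive (fun t => sigma t x2) x1 -> ex_derive (fun t => g t x2 u) x1 ->
  Defs.d1 (fbar sigma g) x1 x2 u =
  exp (sigma x1 x2) * (Derive (fun t => sigma t x2) x1 * g x1 x2 u + Defs.d1 g x1 x2 u).
Proof.
  intros Hs Hg. unfold Defs.d1, fbar.
  rewrite Derive_mult; auto using ex_exp_comp.
  rewrite (Derive_comp exp (fun t => sigma t x2)); auto.
  rewrite (is_derive_unique exp (sigma x1 x2) (exp (sigma x1 x2))). ring.
  apply is_derive_exp.
  eexists; apply is_derive_exp.
Qed.

Lemma d2_fbar sigma g x1 x2 u :
  ex_derive (fun t => sigma x1 t) x2 -> ex_derive (fun t => g x1 t u) x2 ->
  Defs.d2 (fbar sigma g) x1 x2 u =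
  exp (sigma x1 x2) * (Derive (fun t => sigma x1 t) x2 * g x1 x2 u + Defs.d2 g x1 x2 u).
Proof.
  intros Hs Hg. unfold Defs.d2, fbar.
  rewrite Derive_mult; auto using ex_exp_comp.
  rewrite (Derive_comp exp (fun t => sigma x1 t)); auto.
  rewrite (is_derive_unique exp (sigma x1 x2) (exp (sigma x1 x2))). ring.
  apply is_derive_exp.
  eexists; apply is_derive_exp.
Qed.

Theorem proposition4p5 :
  forall (U : R -> R -> Prop) (f : fun3) (sigma : R -> R -> R),
    open (fun p : R * R => U (fst p) (snd p)) ->
    smooth_on (fun x1 x2 _ => U x1 x2) f ->
    smooth_on (fun x1 x2 _ => U x1 x2) (fun x1 x2 _ => sigma x1 x2) ->
    (forall x1 x2 u, U x1 x2 -> 0 < f x1 x2 u) ->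
    (forall x1 x2 u, U x1 x2 -> du (du f) x1 x2 u <> 0) ->
    (forall x1 x2 u, U x1 x2 -> f x1 x2 u - u * du f x1 x2 u <> 0) ->
    forall x1 x2 u, U x1 x2 ->
      let s1 := Derive (fun t => sigma t x2) x1 in
      let s2 := Derive (fun t => sigma x1 t) x2 in
      let Q := Qf f x1 x2 u in
      let Q' := du (Qf f) x1 x2 u in
      let Q'' := du (du (Qf f)) x1 x2 u in
      let Q''' := du3 (Qf f) x1 x2 u in
      du3 (f1 (fbar sigma f)) x1 x2 u
        + Qf (fbar sigma f) x1 x2 u * du3 (f2 (fbar sigma f)) x1 x2 u
      = du3 (f1 f) x1 x2 u + Q * du3 (f2 f) x1 x2 u
        + (2 * s1 * Q * Q' * Q''' - 3 * s1 * Q'' ^ 2 * Q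
           - 2 * s2 * Q' * Q''' + 3 * s2 * Q'' ^ 2) / (2 * Q' ^ 2).
Proof.
  intros U f sigma Hopen Hf Hs Hpos Hf2 HW x1 x2 u HU. cbv zeta.
  set (s1 := Derive (fun t => sigma t x2) x1).
  set (s2 := Derive (fun t => sigma x1 t) x2).
  pose proof (leaf_sm (fun a b _ => U a b) f x1 x2 Hf (fun _ => HU)) as Lf.
  assert (sF : sm (fun t => f x1 x2 t)) by exact (Lf nil).
  assert (sF1 : sm (fun t => du f x1 x2 t)) by exact (Lf (DU :: nil)).
  assert (sF2 : sm (fun t => du (du f) x1 x2 t)) by exact (Lf (DU :: DU :: nil)).
  assert (sa : sm (fun t => Defs.d1 f x1 x2 t)) by exact (Lf (D1 :: nil)).
  assert (sb : sm (fun t => Defs.d2 f x1 x2 t)) by exact (Lf (D2 :: nil)).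
  assert (sc : sm (fun t => Defs.d1 (du f) x1 x2 t)) by exact (Lf (D1 :: DU :: nil)).
  assert (se : sm (fun t => Defs.d2 (du f) x1 x2 t)) by exact (Lf (D2 :: DU :: nil)).
  assert (hW : forall t, f x1 x2 t - t * du f x1 x2 t <> 0) by auto.
  assert (hF : forall t, f x1 x2 t <> 0) by (intro t; specialize (Hpos x1 x2 t HU); lra).
  assert (hF2 : forall t, du (du f) x1 x2 t <> 0) by auto.
  assert (sW : sm (fun t => f x1 x2 t - t * du f x1 x2 t)).
  { apply sm_minus; auto. apply sm_mult; auto. apply sm_id. }
  assert (sQ : sm (fun t => Qf f x1 x2 t)).
  { unfold Qf. apply sm_div; auto. }
  assert (HWd : forall t : R, is_derive (fun s : R => f x1 x2 s - s * du f x1 x2 s) t (- t * du (du f) x1 x2 t)).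
  { intro t. auto_derive.
    - split; [apply sm_ex; auto | split; [apply sm_ex; auto | auto]].
    - unfold du. ring. }
  assert (hQ1 : forall t, du (Qf f) x1 x2 t =
     f x1 x2 t * du (du f) x1 x2 t / (f x1 x2 t - t * du f x1 x2 t) ^ 2).
  { intro t. unfold du at 1, Qf. rewrite Derive_div; auto.
    2: apply sm_ex; auto. 2: apply sm_ex; auto.
    rewrite (is_derive_unique _ _ _ (HWd t)).
    change (Derive (du f x1 x2) t) with (du (du f) x1 x2 t).
    unfold Rdiv. f_equal. ring.
  }
  assert (hQ1nz : forall t, du (Qf f) x1 x2 t <> 0).
  { intro t. rewrite hQ1. unfold Rdiv.
    repeat apply Rmult_integral_contrapositive_currified; auto.
    apply Rinv_neq_0_compat. apply pow_nonzero; auto. }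
  assert (sQ1 : sm (fun t => du (Qf f) x1 x2 t)) by exact (sm_D _ sQ).
  set (B := fun t => / du (Qf f) x1 x2 t).
  set (A := fun t => Qf f x1 x2 t * B t).
  assert (sB : sm B) by (apply sm_inv; auto).
  assert (sA : sm A) by (apply sm_mult; auto).
  assert (ex1 : forall t, ex_derive (fun s => sigma s x2) x1) by (intro t; exact (proj1 (Hs nil x1 x2 t HU) D1)).
  assert (ex2 : forall t, ex_derive (fun s => sigma x1 s) x2) by (intro t; exact (proj1 (Hs nil x1 x2 t HU) D2)).
  assert (E1 : forall t, f1 (fbar sigma f) x1 x2 t = f1 f x1 x2 t + (s1/2 + s2/2 * t + 0 * (t*t))
     + ((-s1/2) * (Qf f x1 x2 t * A t) + s2/2 * A t)).
  { intro t. unfold f1. rewrite !du_fbar.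
    rewrite (d1_fbar sigma f), (d2_fbar sigma f), (d1_fbar sigma (du f)), (d2_fbar sigma (du f));
      auto.
    all: try first [exact (proj1 (Hf nil x1 x2 t HU) D1) | exact (proj1 (Hf nil x1 x2 t HU) D2) | exact (proj1 (Hf (DU::nil) x1 x2 t HU) D1) | exact (proj1 (Hf (DU::nil) x1 x2 t HU) D2)].
    unfold A, B, s1, s2. rewrite hQ1. unfold Qf, fbar.
    pose proof (exp_pos (sigma x1 x2)).
    field. repeat split; auto; lra. }
  assert (E2 : forall t, f2 (fbar sigma f) x1 x2 t = f2 f x1 x2 t + (0 + s1/2 * t + s2/2 * (t*t))
     + (s1/2 * A t + (-s2/2) * B t)).
  { intro t. unfold f2. rewrite !du_fbar.
    rewrite (d1_fbar sigma f), (d2_fbar sigma f), (d1_fbar sigma (du f)), (d2_fbar sigma (du f)); auto.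
    all: try first [exact (proj1 (Hf nil x1 x2 t HU) D1) | exact (proj1 (Hf nil x1 x2 t HU) D2) | exact (proj1 (Hf (DU::nil) x1 x2 t HU) D1) | exact (proj1 (Hf (DU::nil) x1 x2 t HU) D2)].
    unfold A, B, s1, s2. rewrite hQ1. unfold Qf, fbar.
    pose proof (exp_pos (sigma x1 x2)).
    field. repeat split; auto; lra. }
  assert (E3 : Qf (fbar sigma f) x1 x2 u = Qf f x1 x2 u).
  { unfold Qf. rewrite du_fbar. unfold fbar.
    pose proof (exp_pos (sigma x1 x2)).
    field. split; auto.
    replace (exp (sigma x1 x2) * f x1 x2 u - u * (exp (sigma x1 x2) * du f x1 x2 u))
      with (exp (sigma x1 x2) * (f x1 x2 u - u * du f x1 x2 u)) by ring.
    apply Rmult_integral_contrapositive_currified; auto; lra. }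
  rewrite E3.
  change (du3 (f1 (fbar sigma f)) x1 x2 u) with (Derive_n (fun t => f1 (fbar sigma f) x1 x2 t) 3 u).
  change (du3 (f2 (fbar sigma f)) x1 x2 u) with (Derive_n (fun t => f2 (fbar sigma f) x1 x2 t) 3 u).
  change (du3 (f1 f) x1 x2 u) with (Derive_n (fun t => f1 f x1 x2 t) 3 u).
  change (du3 (f2 f) x1 x2 u) with (Derive_n (fun t => f2 f x1 x2 t) 3 u).
  change (du3 (Qf f) x1 x2 u) with (Derive_n (fun t => Qf f x1 x2 t) 3 u).
  change (du (du (Qf f)) x1 x2 u) with (Derive_n (fun t => Qf f x1 x2 t) 2 u).
  change (du (Qf f) x1 x2 u) with (Derive_n (fun t => Qf f x1 x2 t) 1 u).
  assert (sf1 : sm (fun t => f1 f x1 x2 t)).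
  { unfold f1. smt. intro t; repeat apply Rmult_integral_contrapositive_currified; auto; lra. }
  assert (sf2 : sm (fun t => f2 f x1 x2 t)).
  { unfold f2. smt. intro t; repeat apply Rmult_integral_contrapositive_currified; auto; lra. }
  assert (sA' : sm (fun t => A t)) by exact sA.
  assert (sB' : sm (fun t => B t)) by exact sB.
  assert (H1 : Derive_n (fun t => f1 (fbar sigma f) x1 x2 t) 3 u =
    Derive_n (fun t => f1 f x1 x2 t) 3 u + (-s1/2) * Derive_n (fun t => Qf f x1 x2 t * A t) 3 u
    + s2/2 * Derive_n (fun t => A t) 3 u).
  { rewrite (Derive_n_ext (fun t => f1 (fbar sigma f) x1 x2 t) _ 3 u E1). apply D3_split; smt. }
  assert (H2 : Derive_n (fun t => f2 (fbar sigma f) x1 x2 t) 3 u =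
    Derive_n (fun t => f2 f x1 x2 t) 3 u + (s1/2) * Derive_n (fun t => A t) 3 u
    + (-s2/2) * Derive_n (fun t => B t) 3 u).
  { rewrite (Derive_n_ext (fun t => f2 (fbar sigma f) x1 x2 t) _ 3 u E2). apply D3_split; smt. }
  rewrite H1, H2.
  assert (HQA : Derive_n (fun t => Qf f x1 x2 t * A t) 3 u =
    Derive_n (fun t => Qf f x1 x2 t) 3 u * A u + 3 * Derive_n (fun t => Qf f x1 x2 t) 2 u * Derive_n (fun t => A t) 1 u
    + 3 * Derive_n (fun t => Qf f x1 x2 t) 1 u * Derive_n (fun t => A t) 2 u + Qf f x1 x2 u * Derive_n (fun t => A t) 3 u).
  { exact (L3 (fun t => Qf f x1 x2 t) (fun t => A t) u sQ sA'). }
  assert (HA3 : Derive_n (fun t => A t) 3 u =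
    Derive_n (fun t => Qf f x1 x2 t) 3 u * B u + 3 * Derive_n (fun t => Qf f x1 x2 t) 2 u * Derive_n (fun t => B t) 1 u
    + 3 * Derive_n (fun t => Qf f x1 x2 t) 1 u * Derive_n (fun t => B t) 2 u + Qf f x1 x2 u * Derive_n (fun t => B t) 3 u).
  { exact (L3 (fun t => Qf f x1 x2 t) (fun t => B t) u sQ sB'). }
  assert (HA2 : Derive_n (fun t => A t) 2 u =
    Derive_n (fun t => Qf f x1 x2 t) 2 u * B u + 2 * Derive_n (fun t => Qf f x1 x2 t) 1 u * Derive_n (fun t => B t) 1 u
    + Qf f x1 x2 u * Derive_n (fun t => B t) 2 u).
  { exact (L2 (fun t => Qf f x1 x2 t) (fun t => B t) u sQ sB'). }
  assert (HA1 : Derive_n (fun t => A t) 1 u =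
    Derive_n (fun t => Qf f x1 x2 t) 1 u * B u + Qf f x1 x2 u * Derive_n (fun t => B t) 1 u).
  { exact (L1 (fun t => Qf f x1 x2 t) (fun t => B t) u sQ sB'). }
  assert (HA0 : A u = Qf f x1 x2 u * B u) by reflexivity.
  assert (HBc : forall k, Derive_n (fun t => B t * du (Qf f) x1 x2 t) (S k) u = 0).
  { intro k. rewrite (Derive_n_ext (fun t => B t * du (Qf f) x1 x2 t) (fun _ => 1)).
    apply Derive_n_const. intro t. unfold B. field. auto. }
  assert (HQ1n : forall k, Derive_n (fun t => du (Qf f) x1 x2 t) k u = Derive_n (fun t => Qf f x1 x2 t) (S k) u).
  { intro k. rewrite <- Dn_S. reflexivity. }
  assert (HB1 : Derive_n (fun t => B t) 1 u * Derive_n (fun t => Qf f x1 x2 t) 1 u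
     + B u * Derive_n (fun t => Qf f x1 x2 t) 2 u = 0).
  { transitivity (Derive_n (fun t => B t * du (Qf f) x1 x2 t) 1 u); [| apply HBc].
    rewrite L1; auto; rewrite !HQ1n; ring. }
  assert (HB2 : Derive_n (fun t => B t) 2 u * Derive_n (fun t => Qf f x1 x2 t) 1 u
     + 2 * Derive_n (fun t => B t) 1 u * Derive_n (fun t => Qf f x1 x2 t) 2 u
     + B u * Derive_n (fun t => Qf f x1 x2 t) 3 u = 0).
  { transitivity (Derive_n (fun t => B t * du (Qf f) x1 x2 t) 2 u); [| apply HBc].
    rewrite L2; auto; rewrite !HQ1n; ring. }
  assert (HB0 : B u = / Derive_n (fun t => Qf f x1 x2 t) 1 u) by reflexivity.
  assert (hq1 : Derive_n (fun t => Qf f x1 x2 t) 1 u <> 0) by exact (hQ1nz u).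
  rewrite HQA, HA3, HA2, HA1, HA0.
  clearbody A B.
  set (q1 := Derive_n (fun t => Qf f x1 x2 t) 1 u) in *.
  set (q2 := Derive_n (fun t => Qf f x1 x2 t) 2 u) in *.
  set (q3 := Derive_n (fun t => Qf f x1 x2 t) 3 u) in *.
  set (b1 := Derive_n (fun t => B t) 1 u) in *.
  set (b2 := Derive_n (fun t => B t) 2 u) in *.
  assert (Hb1 : b1 = - (B u * q2) / q1) by (apply solve_lin; auto; lra).
  assert (Hb2 : b2 = - (2 * b1 * q2 + B u * q3) / q1) by (apply solve_lin; auto; lra).
  rewrite Hb2. rewrite Hb1. rewrite HB0. field. auto.
Qed.
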